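(* For every integer $n\ge2$, $$\mathrm{ODP}(\mathrm{Tour}_n,\mathrm{Cycle}_n)=n\,x\,\mathrm{ODP}(\mathrm{Tour}_{n-1},\mathrm{Path}_{n-1}).$$
   Context: $\mathrm{Tour}_n$ is the directed graph on $[n]$ with edges $i\to j$ for all $n\ge i>j\ge1$. $\mathrm{Path}_n$ is the directed graph on $[n]$ with edges $i\to i+1$ for $1\le i\le n-1$. For $n\ge2$, $\mathrm{Cycle}_n$ is the directed multigraph on $[n]$ with edges $i\to i+1$ ($1\le i\le n-1$) and $n\to1$; for $n=2$ its edges are $1\to2$ and $2\to1$. For directed graphs $X,Y$ with $|V(X)|=|V(Y)|$, $\mathrm{DFS}(X,Y)$ has as vertices the bijections $\sigma:V(X)\to V(Y)$. For each $\sigma$ and ordered pair $(a,b)$ of distinct vertices, it has $m_X(a,b)m_Y(\sigma(a),\sigma(b))$ edges from $\sigma$ to $\sigma\circ(a\,b)$, where $m_X(a,b)$ is the number of edges $a\to b$ in $X$. Thus $\mathrm{outdeg}(\sigma)=\sum_{a\ne b}m_X(a,b)m_Y(\sigma(a),\sigma(b))$ and $\mathrm{ODP}(X,Y)=\sum_\sigma x^{\mathrm{outdeg}(\sigma)}$. *)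

(* Defs.v *)
From mathcomp Require Import all_boot all_order fingroup perm.
From mathcomp Require Import all_algebra.
Set Implicit Arguments. Unset Strict Implicit. Unset Printing Implicit Defensive.
Import GRing.Theory.
Local Open Scope ring_scope.

(* A directed multigraph on the vertex set [n] = {1,...,n} is represented by
   its edge-multiplicity function on 'I_n, where index k : 'I_n stands for
   vertex k+1.  m a b = number of edges a -> b. *)
Definition mgraph (n : nat) := 'I_n -> 'I_n -> nat.

Definition Tour (n : nat) : mgraph n := fun a b => (b < a)%N : nat.

Definition Path (n : nat) : mgraph n := fun a b => (b == a.+1 :> nat) : nat.

Definition Cycle (n : nat) : mgraph n :=
  fun a b => ((b == a.+1 :> nat) : nat) + (((a == n.-1 :> nat) && (b == 0 :> nat)) : nat).

(* Out-degree of the vertex sigma in DFS(X,Y), for |V(X)| = |V(Y)| = n;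
   vertices of DFS(X,Y) are the bijections V(X) -> V(Y), i.e. permutations. *)
Definition outdeg (n : nat) (X Y : mgraph n) (s : {perm 'I_n}) : nat :=
  (\sum_(a : 'I_n) \sum_(b : 'I_n | a != b) X a b * Y (s a) (s b))%N.

Definition ODP (n : nat) (X Y : mgraph n) : {poly int} :=
  \sum_(s : {perm 'I_n}) 'X^(outdeg X Y s).

Arguments Tour n : clear implicits.
Arguments Path n : clear implicits.
Arguments Cycle n : clear implicits.

(* Main.v *)
Require Import Defs.
From mathcomp Require Import all_boot all_order fingroup perm.
From mathcomp Require Import all_algebra.
Import GRing.Theory.
Set Implicit Arguments. Unset Strict Implicit.
Local Open Scope group_scope.
Local Open Scope nat_scope.

Definition Dc n (t : {perm 'I_n}) : nat := (\sum_(u : 'I_n) (t (ordS u) < t u))%N.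
Definition Lp n (t : {perm 'I_n}) : nat :=
  (\sum_(u : 'I_n) ((u.+1 < n) && (t (ordS u) < t u)))%N.

Lemma outdeg_gen n (Y : mgraph n) (P : pred 'I_n) (s : {perm 'I_n}) :
  (forall u w, Y u w = (P u && (w == ordS u)) :> nat) ->
  (forall u, P u -> ordS u != u) ->
  outdeg (Tour n) Y s = (\sum_u (P u && (s^-1 (ordS u) < s^-1 u)))%N.
Proof.
move=> HY HP; rewrite /outdeg (reindex_inj (@perm_inj _ s^-1)) /=.
apply: eq_bigr => u _; rewrite permKV.
case Pu: (P u); last by rewrite big1 // => b _; rewrite HY Pu muln0.
rewrite (bigD1 (s^-1 (ordS u))) /=; last by rewrite (inj_eq perm_inj) eq_sym HP.
rewrite big1 ?addn0; last first.
  move=> b /andP[_ hb]; rewrite HY Pu /=.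
  case: eqP => [e|]; last by rewrite muln0.
  by move: hb; rewrite -e permK eqxx.
by rewrite /Tour HY Pu permKV eqxx muln1.
Qed.

Lemma Cycle_eq m (u w : 'I_m.+2) : Cycle m.+2 u w = (predT u && (w == ordS u)) :> nat.
Proof.
rewrite /Cycle /= -val_eqE /=.
have hw := ltn_ord w; have := ltn_ord u.
rewrite ltnS leq_eqVlt => /orP[/eqP hu|hu].
  rewrite hu modnn eqxx /=.
  by rewrite (ltn_eqF hw) add0r.
rewrite modn_small // (ltn_eqF hu) /=.
by rewrite addr0.
Qed.

Lemma Path_eq n (u w : 'I_n) : Path n u w = (((u.+1 < n) : bool) && (w == ordS u)) :> nat.
Proof.
rewrite /Path /= -val_eqE /=.
case: ltnP => h; first by rewrite modn_small.
have hw := ltn_ord w.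
by rewrite (ltn_eqF (leq_trans hw h)).
Qed.

Lemma outdeg_cycle m (s : {perm 'I_m.+2}) : outdeg (Tour m.+2) (Cycle m.+2) s = Dc s^-1.
Proof.
rewrite (@outdeg_gen _ _ predT) //; last first.
  move=> u _; rewrite -val_eqE /=; case: (ltnP u.+1 m.+2) => h.
    by rewrite modn_small // neq_ltn ltnSn orbT.
  have hu := ltn_ord u.
  have -> : u.+1 = m.+2 by apply/eqP; rewrite eqn_leq h hu.
  by rewrite modnn; move: h; rewrite ltnS; case: (nat_of_ord u).
exact: Cycle_eq.
Qed.

Lemma outdeg_path n (s : {perm 'I_n}) : outdeg (Tour n) (Path n) s = Lp s^-1.
Proof.
rewrite (@outdeg_gen _ _ (fun u : 'I_n => u.+1 < n)) //; last first.
  by move=> u h; rewrite -val_eqE /= modn_small // neq_ltn ltnSn orbT.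
exact: Path_eq.
Qed.

Lemma ODP_inv n (X Y : mgraph n) F :
  (forall s, outdeg X Y s = F s^-1) ->
  ODP X Y = (\sum_(t : {perm 'I_n}) 'X^(F t))%R.
Proof.
move=> H; rewrite /ODP (reindex_inj (@invg_inj _)) /=.
by apply: eq_bigr => t _; rewrite H invgK.
Qed.

Lemma ordS_add m (u : 'I_m.+2) : ordS u = (u + 1)%R.
Proof. by apply: val_inj => /=; rewrite modnDmr addn1. Qed.

Definition rotp m (c : 'I_m.+2) : {perm 'I_m.+2} := perm (@addIr _ c).

Lemma Dc_rot m (c : 'I_m.+2) t : Dc (rotp c * t) = Dc t.
Proof.
rewrite /Dc [RHS](reindex_inj (@addIr _ c)) /=.
apply: eq_bigr => u _; rewrite !permM !permE !ordS_add.
by rewrite addrAC.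
Qed.

Lemma class_sum m (k : 'I_m.+2) (F : {perm 'I_m.+2} -> {poly int}) :
  (forall c (t : {perm 'I_m.+2}), F (rotp c * t)%g = F t) ->
  (\sum_(t : {perm 'I_m.+2} | t k == ord_max) F t = \sum_(t : {perm 'I_m.+2} | t ord_max == ord_max) F t)%R.
Proof.
move=> HF.
rewrite (reindex_inj (@mulgI _ (rotp (ord_max - k)%R))) /=.
apply: eq_big => t; last by move=> _; rewrite HF.
by rewrite permM permE addrC subrK.
Qed.

Lemma sum_classes m (F : {perm 'I_m.+2} -> {poly int}) :
  (forall c (t : {perm 'I_m.+2}), F (rotp c * t)%g = F t) ->
  (\sum_t F t = (\sum_(t : {perm 'I_m.+2} | t ord_max == ord_max) F t) *+ m.+2)%R.
Proof.
move=> HF.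
rewrite (partition_big (fun t : {perm 'I_m.+2} => t^-1 ord_max) predT) //=.
rewrite (eq_bigr (fun _ => \sum_(t : {perm 'I_m.+2} | t ord_max == ord_max) F t)%R).
  by rewrite sumr_const card_ord.
move=> k _; rewrite -(class_sum k HF); apply: eq_bigl => t.
by rewrite eq_sym -(inj_eq (@perm_inj _ t)) permKV.
Qed.

Lemma bump_max m (x : 'I_m.+1) : bump m.+1 x = x.
Proof. by rewrite /bump leqNgt ltn_ord. Qed.

Lemma Dc_lift m (t : {perm 'I_m.+1}) : Dc (lift_perm ord_max ord_max t) = (Lp t).+1.
Proof.
set T := lift_perm _ _ t.
have TL (x : 'I_m.+1) : val (T (lift ord_max x)) = val (t x).
  by rewrite /T lift_perm_lift; apply: lift_max.
have TM : T ord_max = ord_max by exact: lift_perm_id.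
rewrite /Dc big_ord_recr /= -[(Lp t).+1]addn1 /Lp; congr addn; last first.
  have -> : ordS (@ord_max m.+1) = lift ord_max (@ord0 m).
    by apply: val_inj => /=; rewrite modnn.
  by rewrite TL /T lift_perm_id /=; have := ltn_ord (t ord0); rewrite ltnS => ->.
apply: eq_bigr => i _.
have -> : widen_ord (leqnSn m.+1) i = lift ord_max i by apply: val_inj; rewrite /= bump_max.
case: (ltnP i.+1 m.+1) => h /=.
  have -> : ordS (lift ord_max i) = lift ord_max (ordS i).
    apply: val_inj; rewrite /= !bump_max /= (modn_small h) modn_small ?(ltn_trans h (ltnSn _)) //.
    by rewrite /bump leqNgt h.
  by rewrite !TL.
have -> : ordS (lift ord_max i) = ord_max.
  apply: val_inj; rewrite /= bump_max modn_small; last (by rewrite ltnS; exact: ltn_ord).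
  by apply/eqP; rewrite eqn_leq h ltn_ord.
by rewrite [T ord_max]TM ltnNge -ltnS ltn_ord.
Qed.

Lemma lift_sum m (G : {perm 'I_m.+2} -> {poly int}) :
  (\sum_(s : {perm 'I_m.+2} | s ord_max == ord_max) G s =
   \sum_(t : {perm 'I_m.+1}) G (lift_perm ord_max ord_max t))%R.
Proof.
rewrite (reindex (lift_perm (@ord_max m.+1) (@ord_max m.+1))); last first.
  pose ulsf i (s : {perm 'I_m.+2}) k := odflt k (unlift (s i) (s (lift i k))).
  have ulsfK i (s : {perm 'I_m.+2}) k: lift (s i) (ulsf i s k) = s (lift i k).
    rewrite /ulsf; have:= neq_lift i k.
    by rewrite -(can_eq (permK s)) => /unlift_some[] ? ? ->.
  have inj_ulsf: injective (ulsf (@ord_max m.+1) _).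
    move=> s; apply: can_inj (ulsf (s (@ord_max m.+1)) s^-1%g) _ => k'.
    by rewrite {1}/ulsf ulsfK !permK liftK.
  exists (fun s => perm (inj_ulsf s)) => [s _ | s].
    by apply/permP=> k'; rewrite permE /ulsf lift_perm_lift lift_perm_id liftK.
  move/(s _ =P _) => si0; apply/permP=> k.
  case: (unliftP (@ord_max m.+1) k) => [k'|] ->; rewrite ?lift_perm_id //.
  by rewrite lift_perm_lift permE -(ulsfK _ s k') si0.
by apply: eq_bigl => s; rewrite lift_perm_id eqxx.
Qed.

Local Open Scope ring_scope.
Theorem mainTheorem13 (n : nat) (hn : (2 <= n)%N) :
  ODP (Tour n) (Cycle n) = ((n%:R : int) *: 'X) * ODP (Tour n.-1) (Path n.-1).
Proof.
case: n hn => [|[|m]] // _ /=.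
rewrite (ODP_inv (@outdeg_cycle m)) (ODP_inv (@outdeg_path m.+1)).
rewrite (@sum_classes m (fun t : {perm 'I_m.+2} => 'X^(Dc t))); last by move=> c t; rewrite Dc_rot.
rewrite lift_sum -scalerAl scaler_nat big_distrr /=; congr (_ *+ _).
by apply: eq_bigr => t _; rewrite Dc_lift exprS.
Qed.
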